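(* For every integer $t\geq 2$ there exist a connected graph $G$ and a function $g:A\to B$ such that $fix(G)=t=fix(F_G)$.
   Context: A set $S\subseteq V(H)$ is a fixing set of a graph $H$ if the only automorphism of $H$ fixing every vertex of $S$ is the identity; $fix(H)$ is the minimum cardinality of a fixing set of $H$. Functigraph: let $G_1,G_2$ be disjoint copies of a connected graph $G$, with $A=V(G_1)$, $B=V(G_2)$, and let $g:A\to B$ be a function. The functigraph $F_G$ has vertex set $A\cup B$ and edge set $E(G_1)\cup E(G_2)\cup\{ug(u):u\in A\}$. *)

(* Defs.v *)
From HB Require Import structures.
From mathcomp Require Import all_boot all_fingroup.
Set Implicit Arguments. Unset Strict Implicit. Unset Printing Implicit Defensive.

Section Graphs.
Variable T : finType.

Definition simple_graph (e : rel T) : Prop := symmetric e /\ irreflexive e.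

Definition connected (e : rel T) : Prop := forall x y : T, connect e x y.

Definition is_aut (e : rel T) (s : {perm T}) : bool :=
  [forall x, forall y, e (s x) (s y) == e x y].

Definition fixing_set (e : rel T) (S : {set T}) : bool :=
  [forall s : {perm T}, (is_aut e s && [forall x in S, s x == x]) ==> (s == 1%g)].

Lemma fixing_setT (e : rel T) : exists k, [exists S : {set T}, (#|S| == k) && fixing_set e S].
Proof.
exists #|[set: T]|; apply/existsP; exists [set: T]; rewrite eqxx /=.
apply/forallP => s; apply/implyP => /andP [_ /forallP Hs].
apply/eqP/permP => x; rewrite perm1; apply/eqP.
by have := Hs x; rewrite in_setT.
Qed.

Definition fix_number (e : rel T) : nat := ex_minn (fixing_setT e).

End Graphs.

(* The functigraph F_G on A + B (A = inl-copy G_1, B = inr-copy G_2) of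
   the graph e on T and the function g : A -> B (given as g : T -> T,
   g u being the copy in G_2 of the indicated vertex). *)
Definition functigraph (T : finType) (e : rel T) (g : T -> T) : rel (T + T) :=
  fun x y =>
    match x, y with
    | inl u, inl v => e u v
    | inr u, inr v => e u v
    | inl u, inr w => g u == w
    | inr w, inl u => g u == w
    end.

(* Main.v *)
Require Import Defs.
From mathcomp Require Import all_boot all_fingroup zify.
Set Implicit Arguments. Unset Strict Implicit. Unset Printing Implicit Defensive.

Lemma fix_eq (T : finType) (e : rel T) k :
  (exists S : {set T}, #|S| = k /\ fixing_set e S) ->
  (forall S : {set T}, fixing_set e S -> k <= #|S|) -> fix_number e = k.
Proof.
move=> [S0 [HS0 FS0]] Hlb; rewrite /fix_number.
case: ex_minnP => m /existsP [S /andP [/eqP HS FS]] Hmin.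
apply/eqP; rewrite eqn_leq; apply/andP; split.
  by rewrite -HS0; apply: Hmin; apply/existsP; exists S0; rewrite HS0 eqxx.
by rewrite -HS; apply: Hlb.
Qed.

Section K.
Variable t : nat.
Hypothesis ht : 2 <= t.
Local Notation n := t.+1.
Definition ke : rel 'I_n := fun x y => x != y.
Definition FE := functigraph ke id.

Definition liftf (p : {perm 'I_n}) (z : 'I_n + 'I_n) : 'I_n + 'I_n :=
  match z with inl u => inl (p u) | inr u => inr (p u) end.
Lemma liftf_inj p : injective (liftf p).
Proof. by case=> [u|u] [v|v] //= [] /perm_inj ->. Qed.
Definition lp p := perm (@liftf_inj p).

Lemma lp_aut p : is_aut FE (lp p).
Proof.
apply/forallP => a; apply/forallP => b; rewrite !permE.
by case: a => [u|u]; case: b => [v|v]; rewrite /FE /functigraph /ke /= (inj_eq perm_inj).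
Qed.

Lemma ke_aut (p : {perm 'I_n}) : is_aut ke p.
Proof. by apply/forallP => a; apply/forallP => b; rewrite /ke (inj_eq perm_inj). Qed.

Lemma fix_ke : fix_number ke = t.
Proof.
apply: fix_eq.
  exists [set~ ord_max]; split; first by rewrite cardsC1 card_ord.
  apply/forallP => s; apply/implyP => /andP [_ /forallP Hs].
  have H x : x != ord_max -> s x = x.
    by move=> hx; apply/eqP; have := Hs x; rewrite !inE hx.
  apply/eqP/permP => x; rewrite perm1.
  case: (eqVneq x ord_max) => [->|hx]; last exact: H.
  case: (eqVneq (s ord_max) ord_max) => // hm.
  by move: (H _ hm) => /perm_inj hh; rewrite hh eqxx in hm.
move=> S FS; rewrite leqNgt; apply/negP => hS.
have : 1 < #|~: S| by rewrite cardsCs card_ord setCK; lia.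
case/card_gt1P => x [y [hx hy hxy]].
move/forallP: FS => /(_ (tperm x y)); rewrite ke_aut /=.
have -> : [forall z in S, tperm x y z == z].
  apply/forallP => z; apply/implyP => hz; rewrite permE /=.
  have hzx : z != x by apply/eqP => ?; subst; rewrite inE hz in hx.
  have hzy : z != y by apply/eqP => ?; subst; rewrite inE hz in hy.
  by rewrite (negbTE hzx) (negbTE hzy).
move=> /= /eqP /permP /(_ x); rewrite perm1 tpermL => /eqP.
by rewrite eq_sym (negbTE hxy).
Qed.

Definition colf (z : 'I_n + 'I_n) : 'I_n := match z with inl u => u | inr u => u end.

Lemma fix_FE : fix_number FE = t.
Proof.
apply: fix_eq.
  exists ((@inl _ 'I_n) @: [set~ ord_max]); split.
    by rewrite card_imset ?cardsC1 ?card_ord //; move=> a b [].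
  apply/forallP => s; apply/implyP => /andP [/forallP Ha /forallP Hs].
  have Aut a b : FE (s a) (s b) = FE a b.
    by have /forallP := Ha a => /(_ b) /eqP.
  have H x : x != ord_max -> s (inl x) = inl x.
    move=> hx; apply/eqP; have := Hs (inl x).
    have -> : inl x \in (@inl _ 'I_n) @: [set~ @ord_max t] by apply: imset_f; rewrite !inE.
    by [].
  have : 1 < #|[set~ @ord_max t]| by rewrite cardsC1 card_ord.
  case/card_gt1P => u1 [u2 [h1 h2 h12]].
  rewrite !inE in h1 h2.
  have Hm : s (inl ord_max) = inl ord_max.
    have E1 := Aut (inl ord_max) (inl u1); have E2 := Aut (inl ord_max) (inl u2).
    rewrite (H u1 h1) in E1; rewrite (H u2 h2) in E2.
    move: E1 E2; rewrite /FE /functigraph /ke /= !(eq_sym ord_max) h1 h2.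
    case E: (s (inl ord_max)) => [v|w] //=; last first.
      by move=> /eqP <- /eqP hh; rewrite hh eqxx in h12.
    move=> _ _; case: (eqVneq v ord_max) => [->//|hv].
    by move: (H _ hv); rewrite -{2}E => /perm_inj [] hh; rewrite hh eqxx in hv.
  have Hl x : s (inl x) = inl x.
    by case: (eqVneq x ord_max) => [->//|hx]; apply: H.
  apply/eqP/permP => z; rewrite perm1; case: z => [x|w]; first exact: Hl.
  case E: (s (inr w)) => [v|w'].
    by move: E; rewrite -(Hl v) => /perm_inj.
  have := Aut (inr w) (inl w); rewrite Hl E /FE /functigraph /=.
  by rewrite eqxx => /eqP ->.
move=> S FS; rewrite leqNgt; apply/negP => hS.
pose C := [set u | (inl u \in S) || (inr u \in S)].
have hC : #|C| <= #|S|.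
  apply: leq_trans (leq_imset_card colf S); apply: subset_leq_card.
  apply/subsetP => u; rewrite inE => /orP [] hu.
    by apply: (imset_f colf hu).
  by apply: (imset_f colf hu).
have : 1 < #|~: C| by rewrite cardsCs card_ord setCK; lia.
case/card_gt1P => x [y [hx hy hxy]].
rewrite !inE !negb_or in hx hy.
move/andP: hx => [hx1 hx2]; move/andP: hy => [hy1 hy2].
move/forallP: FS => /(_ (lp (tperm x y))); rewrite lp_aut /=.
have -> : [forall z in S, lp (tperm x y) z == z].
  apply/forallP => z; apply/implyP => hz; rewrite permE.
  case: z hz => [z|z] hz /=; rewrite permE /=.
    have hzx : z != x by apply/eqP => ?; subst; rewrite hz in hx1.
    have hzy : z != y by apply/eqP => ?; subst; rewrite hz in hy1.
    by rewrite (negbTE hzx) (negbTE hzy).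
  have hzx : z != x by apply/eqP => ?; subst; rewrite hz in hx2.
  have hzy : z != y by apply/eqP => ?; subst; rewrite hz in hy2.
  by rewrite (negbTE hzx) (negbTE hzy).
move=> /= /eqP /permP /(_ (inl x)); rewrite perm1 permE /= tpermL => [[]] /eqP.
by rewrite eq_sym (negbTE hxy).
Qed.

End K.

Theorem lemma2p6 (t : nat) (ht : 2 <= t) :
  exists (n : nat) (e : rel 'I_n) (g : 'I_n -> 'I_n),
    simple_graph e /\ connected e /\
    fix_number e = t /\ fix_number (functigraph e g) = t.
Proof.
exists t.+1, (@ke t), id; split; [|split; [|split]].
- split; first by move=> x y; rewrite /ke eq_sym.
  by move=> x; rewrite /ke eqxx.
- move=> x y; case: (eqVneq x y) => [->|h]; first exact: connect0.
  by apply: connect1.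
- exact: fix_ke.
- exact: (fix_FE ht).
Qed.
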